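(* Let $C$ be the index of a source row/column of the padded incident matrix $\widetilde A$, let $P_{\mathrm{cur}}$ be (a pair of) column indices of $X\in\mathbb{R}^{K\times d}$ holding the positional embedding of row/column $C$, and let $D$ be a target column index. Then: (1) a single transformer layer can simulate reading a row of $\widetilde A$, i.e. $X[:,D]\leftarrow\widetilde A[C,:]$ (as a column); and (2) a single transformer layer can simulate reading a column of $\widetilde A$, i.e. $X[:,D]\leftarrow\widetilde A[:,C]$.
   Context: Conventions: rows/columns indexed from $1$; $X[i,j]$ is the $(i,j)$ entry, $X[:,j]$ the $j$-th column, $\widetilde A[C,:]$ the $C$-th row. $\phi(x)=\max\{x,0\}$ entrywise. Hardmax $\sigma$: row $i$ of $\sigma(\Phi)$ is $\frac{1}{|S_i|}\sum_{k\in S_i}e_k$, $S_i=\{k:\Phi_{ik}=\max_j\Phi_{ij}\}$. Positional encoding: $\widehat\delta>0$ is the nearest representable approximation of the minimum increment angle, $R_{\widehat\delta}=\begin{bmatrix}\cos\widehat\delta&-\sin\widehat\delta\\ \sin\widehat\delta&\cos\widehat\delta\end{bmatrix}$, $p_0=(0,1)^\top$, $p_i=R_{\widehat\delta}^\top p_{i-1}$, position $i$ encoded by $(p_i^{(1)},p_i^{(2)})$. A weighted hypergraph has vertices $v_1,\dots,v_{n_v}$, hyperedges $e_1,\dots,e_{n_e}$ with weights $w(e_j)>0$; its incident matrix $A\in\mathbb{R}^{n_v\times n_e}$ has $A_{ij}=w(e_j)$ if $v_i\in e_j$ and $0$ otherwise; for $K\ge\max\{n_v,n_e\}+1$, the padded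 incident matrix $\widetilde A\in\mathbb{R}^{K\times K}$ has $\widetilde A_{i+1,j+1}=A_{ij}$ and zeros elsewhere. A transformer layer on $X\in\mathbb{R}^{K\times d}$ is $f(X,\widetilde A)=f_{\mathrm{mlp}}(f_{\mathrm{attn}}(X,\widetilde A))$, $f_{\mathrm{attn}}(X,\widetilde A)=\sum_{i\in M_A}\psi^{(i)}(X,\widetilde A)+\sum_{i\in M_{A^\top}}\psi^{(i)}(X,\widetilde A^\top)+\sum_{i\in M}\psi^{(i)}(X,I_K)+X$, $\psi(X,B)=B\,\sigma(XW_QW_K^\top X^\top)XW_V$ ($W_Q,W_K\in\mathbb{R}^{d\times2}$, $W_V\in\mathbb{R}^{d\times d}$), $f_{\mathrm{mlp}}(X)=Z^{(4)}W^{(4)}+X$, $Z^{(1)}=X$, $Z^{(j+1)}=\phi(Z^{(j)}W^{(j)})$ ($j=1,2,3$). Storage convention: scalars in the top row of a column (rest $0$), arrays of length $K-1$ in rows $2,\dots,K$ (top $0$); designated columns $B_{\mathrm{global}}$ (top $1$, rest $0$), $B_{\mathrm{local}}$ (top $0$, rest $1$), positional columns $P_1,P_2$ (array position $i$ holds $p_i^{(1)},p_i^{(2)}$), and scratchpad columns. ''Simulating an operation'' means the layer's weights can be chosen so that applying it to $X$ performs the stated update. *)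

(* Defs.v *)
From HB Require Import structures.
From mathcomp Require Import all_boot all_order all_algebra.
From mathcomp Require Import all_classical all_reals all_analysis.
Set Implicit Arguments. Unset Strict Implicit. Unset Printing Implicit Defensive.
Import Order.TTheory GRing.Theory Num.Theory.
Local Open Scope ring_scope.

(* Conventions: all indices are 0-based in Rocq; the paper's row/column 1
   (the "top row") is index 0 here. *)

Section Defs.
Variable R : realType.

Definition relu_mx m n (M : 'M[R]_(m, n)) : 'M[R]_(m, n) :=
  \matrix_(i, j) Num.max (M i j) 0.

Definition argmax_set n (Phi : 'M[R]_n) (i : 'I_n) : {set 'I_n} :=
  [set k | [forall j, Phi i j <= Phi i k]].

Definition hardmax n (Phi : 'M[R]_n) : 'M[R]_n :=
  \matrix_(i, k) (if k \in argmax_set Phi i then (#|argmax_set Phi i|%:R)^-1 else 0).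

Record head (d : nat) := Head {
  WQ : 'M[R]_(d, 2);
  WK : 'M[R]_(d, 2);
  WV : 'M[R]_(d, d) }.

Definition psi K d (h : head d) (X : 'M[R]_(K, d)) (B : 'M[R]_K) : 'M[R]_(K, d) :=
  B *m hardmax (X *m WQ h *m (WK h)^T *m X^T) *m X *m WV h.

Record layer (d : nat) := Layer {
  heads_A  : seq (head d);
  heads_AT : seq (head d);
  heads_I  : seq (head d);
  h1 : nat; h2 : nat; h3 : nat;
  W1 : 'M[R]_(d, h1);
  W2 : 'M[R]_(h1, h2);
  W3 : 'M[R]_(h2, h3);
  W4 : 'M[R]_(h3, d) }.

Definition f_attn K d (L : layer d) (X : 'M[R]_(K, d)) (A : 'M[R]_K) : 'M[R]_(K, d) :=
  \sum_(h <- heads_A L) psi h X A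
  + \sum_(h <- heads_AT L) psi h X A^T
  + \sum_(h <- heads_I L) psi h X 1%:M
  + X.

Definition f_mlp K d (L : layer d) (X : 'M[R]_(K, d)) : 'M[R]_(K, d) :=
  let Z2 := relu_mx (X *m W1 L) in
  let Z3 := relu_mx (Z2 *m W2 L) in
  let Z4 := relu_mx (Z3 *m W3 L) in
  Z4 *m W4 L + X.

Definition layer_apply K d (L : layer d) (X : 'M[R]_(K, d)) (A : 'M[R]_K) :=
  f_mlp L (f_attn L X A).

(* Positional encoding: p_0 = (0,1), p_i = R_delta^T p_{i-1}. *)
Fixpoint pos (delta : R) (i : nat) : R * R :=
  match i with
  | 0 => (0, 1)
  | i'.+1 => let: (a, b) := pos delta i' in
             (cos delta * a + sin delta * b, - sin delta * a + cos delta * b)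
  end.

(* Weighted hypergraph: vertices 'I_nv, hyperedges 'I_ne, incidence relation
   (v \in e_j iff hinc v j), positive weights. *)
Record whypergraph := WHypergraph {
  nv : nat;
  ne : nat;
  hinc : 'I_nv -> 'I_ne -> bool;
  hw : 'I_ne -> R;
  hw_pos : forall j, 0 < hw j }.

Definition incident_mx (H : whypergraph) : 'M[R]_(nv H, ne H) :=
  \matrix_(i, j) (if hinc i j then hw j else 0).

(* padded incident matrix: Atilde[i+1, j+1] = A[i, j] (0-based here), zero elsewhere *)
Definition padded_inc (K : nat) (H : whypergraph) : 'M[R]_K :=
  \matrix_(i < K, j < K)
    match nat_of_ord i, nat_of_ord j with
    | i'.+1, j'.+1 =>
        match (insub i' : option 'I_(nv H)), (insub j' : option 'I_(ne H)) with
        | Some a, Some b => incident_mx H a b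
        | _, _ => 0
        end
    | _, _ => 0
    end.

Definition scalar_col K d (X : 'M[R]_(K, d)) (c : 'I_d) (v : R) :=
  forall i : 'I_K, X i c = if nat_of_ord i == 0%N then v else 0.

Definition global_col K d (X : 'M[R]_(K, d)) (c : 'I_d) := scalar_col X c 1.

Definition local_col K d (X : 'M[R]_(K, d)) (c : 'I_d) :=
  forall i : 'I_K, X i c = if nat_of_ord i == 0%N then 0 else 1.

(* array position i (1 <= i <= K-1) sits in row i (0-based) *)
Definition pos_cols K d (delta : R) (X : 'M[R]_(K, d)) (P1 P2 : 'I_d) :=
  forall i : 'I_K,
    X i P1 = (if nat_of_ord i == 0%N then 0 else (pos delta i).1) /\
    X i P2 = (if nat_of_ord i == 0%N then 0 else (pos delta i).2).

Definition set_col K d (X : 'M[R]_(K, d)) (D : 'I_d) (v : 'I_K -> R) : 'M[R]_(K, d) :=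
  \matrix_(i, j) (if j == D then v i else X i j).

End Defs.

(* Main.v *)
Require Import Defs.
From HB Require Import structures.
From mathcomp Require Import all_boot all_order all_algebra.
From mathcomp Require Import all_classical all_reals all_analysis.
From mathcomp Require Import ring lra zify.
Import Order.TTheory GRing.Theory Num.Theory.
Local Open Scope ring_scope.

Lemma pos_eq (R : realType) (delta : R) (i : nat) :
  pos delta i = (sin (i%:R * delta), cos (i%:R * delta)).
Proof.
elim: i => [|i IH] /=; first by rewrite mul0r sin0 cos0.
rewrite IH -addn1 natrD mulrDl mul1r sinD cosD; congr pair; ring.
Qed.

Lemma cos_lt1 (R : realType) (x : R) : 0 < x -> x < 2 * pi -> cos x < 1.
Proof.
move=> h0 h1.
have -> : x = (x / 2) *+ 2 by rewrite -mulr_natr mulfVK // pnatr_eq0.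
rewrite cos_mulr2n cos2sin2.
have : 0 < sin (x / 2) by apply: sin_gt0_pi; apply/andP; split; lra.
move=> hs. have : 0 < sin (x/2) ^+ 2 by rewrite exprn_gt0.
lra.
Qed.

Lemma dot_eq1 (R : realType) (delta : R) (a : nat) :
  sin (a%:R * delta) * sin (a%:R * delta) + cos (a%:R * delta) * cos (a%:R * delta) = 1.
Proof. by rewrite -!expr2 addrC cos2Dsin2. Qed.

Lemma dot_lt1 (R : realType) (K : nat) (delta : R) (a b : nat) :
  0 < delta -> (K.-1)%:R * delta < 2 * pi -> (a < K)%N -> (b < K)%N -> a <> b ->
  sin (a%:R * delta) * sin (b%:R * delta) + cos (a%:R * delta) * cos (b%:R * delta) < 1.
Proof.
move=> hd hK.
suff W: forall a b, (b < a)%N -> (a < K)%N -> sin (a%:R * delta) * sin (b%:R * delta) + cos (a%:R * delta) * cos (b%:R * delta) < 1.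
  move=> ha hb hab; case: (ltngtP a b) => h.
  - by rewrite [X in X < _]addrC [_ + _]addrC [cos _ * _]mulrC [sin _ * _]mulrC; apply: W.
  - exact: W.
  - by move: hab; rewrite h.
move=> {}a {}b lt ha.
rewrite addrC -cosB -mulrBl -natrB; last exact: ltnW.
apply: cos_lt1.
  by rewrite mulr_gt0 // ltr0n subn_gt0.
apply: le_lt_trans hK; rewrite ler_pM2r // ler_nat; lia.
Qed.

Lemma mulmx_delta_entry (R : realType) (m n p : nat) (Y : 'M[R]_(m,n)) (i : 'I_n) (j : 'I_p) k a :
  (Y *m delta_mx i j) k a = if a == j then Y k i else 0.
Proof.
rewrite mxE (bigD1 i) //= mxE eqxx /= big1 ?addr0.
  by case: eqP; rewrite ?mulr1 ?mulr0.
by move=> c /negbTE ne; rewrite mxE ne mulr0.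
Qed.

Lemma dot2 (R : realType) (K : nat) (Y Z : 'M[R]_(K,2)) k j :
  (Y *m Z^T) k j = Y k 0 * Z j 0 + Y k 1 * Z j 1.
Proof.
rewrite mxE. rewrite big_ord_recl. rewrite big_ord_recl big_ord0 addr0 !mxE. by congr (_ + _); congr (Y k _ * Z j _); apply: val_inj.
Qed.

Lemma phiE (R : realType) (K d : nat) (h : Defs.head R d) (X : 'M[R]_(K,d)) :
  X *m WQ h *m (WK h)^T *m X^T = (X *m WQ h) *m (X *m WK h)^T.
Proof. by rewrite trmx_mul !mulmxA. Qed.

Lemma hardmax_row (R : realType) n (Phi : 'M[R]_n) i (S : {set 'I_n}) m :
  (forall j, j \in S -> Phi i j = m) -> (forall j, j \notin S -> Phi i j < m) ->
  S != finset.set0 -> forall k, hardmax Phi i k = if k \in S then (#|S|%:R)^-1 else 0.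
Proof.
move=> hS hN /set0Pn [s sS].
have E : argmax_set Phi i = S.
  apply/setP => j; rewrite inE.
  case: (boolP (j \in S)) => jS.
    apply/forallP => l; rewrite (hS _ jS).
    case: (boolP (l \in S)) => lS; first by rewrite (hS _ lS).
    exact: ltW (hN _ lS).
  apply/negP => /forallP /(_ s); rewrite (hS _ sS) => H.
  by have := lt_le_trans (hN _ jS) H; rewrite ltxx.
by move=> k; rewrite mxE E.
Qed.

Lemma thinmx_mul0 (R : realType) (K d : nat) (Z : 'M[R]_(K,0)) (W : 'M[R]_(0,d)) : Z *m W = 0.
Proof. by apply/matrixP => i j; rewrite !mxE big_ord0. Qed.

Lemma padded0l (R : realType) K (H : whypergraph R) (k i : 'I_K) :
  nat_of_ord k = 0%N -> padded_inc K H k i = 0.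
Proof. by rewrite mxE => ->. Qed.

Lemma padded0r (R : realType) K (H : whypergraph R) (k i : 'I_K) :
  nat_of_ord k = 0%N -> padded_inc K H i k = 0.
Proof. by rewrite mxE => ->; case: (nat_of_ord i). Qed.

Lemma addE (R : realType) m n (A B : 'M[R]_(m,n)) i j : (A + B) i j = A i j + B i j.
Proof. by rewrite mxE. Qed.

Section Main.
Variables (R : realType) (K d : nat) (delta : R) (Bg Bl P1 P2 Pc1 Pc2 D : 'I_d) (C : 'I_K).
Hypotheses (hd : 0 < delta) (hK : (K.-1)%:R * delta < 2 * pi) (hC : (0 < nat_of_ord C)%N).

Let sv (a : nat) := sin (a%:R * delta).
Let cv (a : nat) := cos (a%:R * delta).

Definition WP : 'M[R]_(d,2) := delta_mx P1 0 + delta_mx P2 1.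
Definition hA : Defs.head R d :=
  Head (WP) (WP + delta_mx Pc1 0 + delta_mx Pc2 1) (2%:R *: delta_mx Bg D).
Definition hI : Defs.head R d :=
  Head (WP + delta_mx Bg 1) (WP + delta_mx Bg 1) (- delta_mx D D).

Variable X : 'M[R]_(K,d).
Hypotheses (hBg : global_col X Bg) (hP : pos_cols delta X P1 P2)
  (hPc1 : scalar_col X Pc1 (pos delta C).1) (hPc2 : scalar_col X Pc2 (pos delta C).2).

Lemma XP1 k : X k P1 = if nat_of_ord k == 0%N then 0 else sv k.
Proof. by rewrite (hP k).1 pos_eq. Qed.
Lemma XP2 k : X k P2 = if nat_of_ord k == 0%N then 0 else cv k.
Proof. by rewrite (hP k).2 pos_eq. Qed.
Lemma XPc1 k : X k Pc1 = if nat_of_ord k == 0%N then sv C else 0.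
Proof. by rewrite hPc1 pos_eq. Qed.
Lemma XPc2 k : X k Pc2 = if nat_of_ord k == 0%N then cv C else 0.
Proof. by rewrite hPc2 pos_eq. Qed.
Lemma XBg k : X k Bg = if nat_of_ord k == 0%N then 1 else 0.
Proof. by rewrite hBg. Qed.

Lemma XWP k : (X *m WP) k 0 = X k P1 /\ (X *m WP) k 1 = X k P2.
Proof. by rewrite /WP mulmxDr !addE !mulmx_delta_entry /=; split; ring. Qed.

Definition jA (j : 'I_K) : nat := if nat_of_ord j == 0%N then nat_of_ord C else j.

Lemma keyA j : (X *m WK hA) j 0 = sv (jA j) /\ (X *m WK hA) j 1 = cv (jA j).
Proof.
rewrite /= !mulmxDr !addE !mulmx_delta_entry /= XPc1 XPc2 ?(XWP j).1 ?(XWP j).2 XP1 XP2 /jA.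
by case: eqP => _; split; ring.
Qed.

Lemma qA k : nat_of_ord k != 0%N ->
  (X *m WQ hA) k 0 = sv k /\ (X *m WQ hA) k 1 = cv k.
Proof. by move=> /negbTE k0; rewrite /= (XWP k).1 (XWP k).2 XP1 XP2 k0. Qed.

Lemma keyI j : (X *m WK hI) j 0 = sv j /\ (X *m WK hI) j 1 = cv j.
Proof.
rewrite /= !mulmxDr !addE !mulmx_delta_entry /= ?(XWP j).1 ?(XWP j).2 XP1 XP2 XBg /sv /cv.
case: eqP => [->|_]; last by split; ring.
by rewrite mul0r sin0 cos0; split; ring.
Qed.

Let K0 : (0 < K)%N := ltn_trans hC (ltn_ord C).
Let z : 'I_K := Ordinal K0.

Definition PhiA := X *m WQ hA *m (WK hA)^T *m X^T.
Definition PhiI := X *m WQ hI *m (WK hI)^T *m X^T.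

Lemma jA_lt j : (jA j < K)%N.
Proof. by rewrite /jA; case: eqP. Qed.

Lemma PhiAE k j : nat_of_ord k != 0%N ->
  PhiA k j = sv k * sv (jA j) + cv k * cv (jA j).
Proof.
by move=> k0; rewrite /PhiA phiE dot2 (qA k k0).1 (qA k k0).2 (keyA j).1 (keyA j).2.
Qed.

Lemma PhiIE k j : PhiI k j = sv k * sv j + cv k * cv j.
Proof.
rewrite /PhiI phiE dot2 (keyI j).1 (keyI j).2.
have -> : WQ hI = WK hI by [].
by rewrite (keyI k).1 (keyI k).2.
Qed.

Lemma hmI : hardmax PhiI = 1%:M.
Proof.
apply/matrixP => k j.
rewrite (@hardmax_row _ _ _ _ [set k]%SET 1).
- by rewrite cards1 invr1 finset.in_set1 mxE eq_sym; case: eqP.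
- by move=> i; rewrite finset.in_set1 => /eqP ->; rewrite PhiIE dot_eq1.
- move=> i; rewrite finset.in_set1 => ik; rewrite PhiIE.
  apply: (@dot_lt1 _ K delta) => //.
  by move=> /ord_inj E; move: ik; rewrite E eqxx.
- by apply/set0Pn; exists k; rewrite finset.in_set1.
Qed.

Lemma UA k c : nat_of_ord k != 0%N ->
  (hardmax PhiA *m X *m WV hA) k c = if c == D then (k == C)%:R else 0.
Proof.
move=> k0.
set S := [set j | jA j == k]%SET.
have hm : forall j, hardmax PhiA k j = if j \in S then (#|S|%:R)^-1 else 0.
  apply: hardmax_row.
  - by move=> j; rewrite inE => /eqP E; rewrite PhiAE // E dot_eq1.
  - move=> j; rewrite inE => ne; rewrite PhiAE //.
    apply: (@dot_lt1 _ K delta) => //; first exact: jA_lt.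
    by move=> E; move: ne; rewrite -E eqxx.
  - apply/set0Pn; exists k; rewrite inE /jA; by rewrite (negbTE k0).
rewrite /= -scalemxAr mxE mulmx_delta_entry.
case: eqP => // _.
rewrite mxE (bigD1 z) //= big1 => [|j jz]; last first.
  rewrite XBg; case: eqP; last by rewrite mulr0.
  by move=> j0; move: jz; have -> : j = z by apply: ord_inj.
rewrite XBg /= mulr1 addr0 hm.
have zS : (z \in S) = (nat_of_ord C == nat_of_ord k) by rewrite inE /jA.
rewrite zS.
case: eqP => [Ck|Ck]; last first.
  rewrite mulr0; case: eqP => // E; by case: Ck; rewrite E.
have -> : S = [set z; C]%SET.
  apply/setP => j; rewrite !inE /jA.
  case: (boolP (nat_of_ord j == 0%N)) => j0.
    have -> : j = z by apply: ord_inj; apply/eqP.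
    by rewrite Ck !eqxx.
  have -> : (j == z) = false.
    by apply/negP => /eqP E; move: j0; rewrite E.
  by rewrite /= -Ck.
rewrite cards2.
have -> : (z != C) by apply/eqP => E; move: hC; rewrite -E.
have -> : k == C by apply/eqP/ord_inj.
  by rewrite /= divff // pnatr_eq0. by rewrite mulr0.
Qed.


Lemma oppE' m n (A : 'M[R]_(m,n)) i j : (- A) i j = - A i j.
Proof. by rewrite mxE. Qed.
Lemma trE m n (A : 'M[R]_(m,n)) i j : A^T i j = A j i.
Proof. by rewrite mxE. Qed.

Lemma psiA (B : 'M[R]_K) : (forall i k, nat_of_ord k = 0%N -> B i k = 0) ->
  forall i c, psi hA X B i c = if c == D then B i C else 0.
Proof.
move=> hB i c.
have -> : psi hA X B = B *m (hardmax PhiA *m X *m WV hA).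
  by rewrite /psi -/PhiA !mulmxA.
rewrite mxE (bigD1 C) //= UA; last by rewrite -lt0n.
rewrite big1 => [|k kC].
  by case: eqP => _; rewrite ?eqxx ?mulr1 ?mulr0 addr0.
case: (boolP (nat_of_ord k == 0%N)) => k0.
  by rewrite hB ?mul0r //; apply/eqP.
by rewrite UA // (negbTE kC); case: eqP; rewrite mulr0.
Qed.

Lemma psiIE i c : psi hI X 1%:M i c = - (if c == D then X i D else 0).
Proof.
rewrite /psi -/PhiI hmI !mul1mx mulmxN oppE' mulmx_delta_entry.
by [].
Qed.

Definition L1 : layer R d := Layer [::] [:: hA] [:: hI] (0 : 'M[R]_(d,0)) (0 : 'M[R]_(0,0)) (0 : 'M[R]_(0,0)) (0 : 'M[R]_(0,d)).
Definition L2 : layer R d := Layer [:: hA] [::] [:: hI] (0 : 'M[R]_(d,0)) (0 : 'M[R]_(0,0)) (0 : 'M[R]_(0,0)) (0 : 'M[R]_(0,d)).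

Lemma part1 (H : whypergraph R) :
  layer_apply L1 X (padded_inc K H) = set_col X D (fun i => padded_inc K H C i).
Proof.
rewrite /layer_apply /f_mlp thinmx_mul0 add0r /f_attn /= big_nil big_seq1 big_seq1 add0r.
apply/matrixP => i c.
rewrite !addE (@psiA (padded_inc K H)^T); last by move=> i' k k0; rewrite trE padded0l.
rewrite psiIE trE /set_col mxE.
case: eqP => [->|_]; first by rewrite subrK.
by rewrite oppr0 !add0r.
Qed.

Lemma part2 (H : whypergraph R) :
  layer_apply L2 X (padded_inc K H) = set_col X D (fun i => padded_inc K H i C).
Proof.
rewrite /layer_apply /f_mlp thinmx_mul0 add0r /f_attn /= big_nil big_seq1 big_seq1 addr0.
apply/matrixP => i c.
rewrite !addE (@psiA (padded_inc K H)); last by move=> i' k k0; rewrite padded0r.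
rewrite psiIE /set_col mxE.
case: eqP => [->|_]; first by rewrite subrK.
by rewrite oppr0 !add0r.
Qed.

End Main.

Theorem lemmaC7 (R : realType) (K d : nat) (delta : R)
  (Bg Bl P1 P2 Pc1 Pc2 D : 'I_d) (C : 'I_K) :
  0 < delta -> (K.-1)%:R * delta < 2 * pi ->
  uniq [:: Bg; Bl; P1; P2; Pc1; Pc2; D] ->
  (0 < nat_of_ord C)%N ->
  let conv (X : 'M[R]_(K, d)) :=
    [/\ global_col X Bg, local_col X Bl, pos_cols delta X P1 P2,
        scalar_col X Pc1 (pos delta C).1 & scalar_col X Pc2 (pos delta C).2] in
  (* (1) reading row C of Atilde into column D *)
  (exists L : layer R d,
     forall (X : 'M[R]_(K, d)) (H : whypergraph R),
       (maxn (nv H) (ne H) < K)%N -> conv X ->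
       layer_apply L X (padded_inc K H) = set_col X D (fun i => padded_inc K H C i))
  /\
  (* (2) reading column C of Atilde into column D *)
  (exists L : layer R d,
     forall (X : 'M[R]_(K, d)) (H : whypergraph R),
       (maxn (nv H) (ne H) < K)%N -> conv X ->
       layer_apply L X (padded_inc K H) = set_col X D (fun i => padded_inc K H i C)).
Proof.
move=> hd hK _ hC conv; split.
  exists (L1 R d Bg P1 P2 Pc1 Pc2 D) => X H _ [hBg _ hP hPc1 hPc2].
  exact: (@part1 R K d delta Bg P1 P2 Pc1 Pc2 D C hd hK hC X hBg hP hPc1 hPc2 H).
exists (L2 R d Bg P1 P2 Pc1 Pc2 D) => X H _ [hBg _ hP hPc1 hPc2].
exact: (@part2 R K d delta Bg P1 P2 Pc1 Pc2 D C hd hK hC X hBg hP hPc1 hPc2 H).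
Qed.
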